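(* If $0<q<1$, $u>0$ and $v\in\mathbb{R}$, then \[ \left|\left(q^{u+iv};q\right)_{\infty}\right|\ge\left(q^{u};q\right)_{\infty}q^{v^{2}/4}, \qquad \Gamma_{q}(u)\ge\left|\Gamma_{q}(u+iv)\right|q^{v^{2}/4}, \] and \[ \frac{\vartheta_{4}\left(v\vert iu\right)}{\vartheta_{4}\left(0\vert iu\right)}\ge e^{-\pi v^{2}/u}. \]
   Context: For $0<q<1$ and $a\in\mathbb{C}$, $(a;q)_{\infty}=\prod_{k=0}^{\infty}(1-aq^{k})$ and $(a_1,\dots,a_r;q)_\infty=\prod_{s=1}^r(a_s;q)_\infty$; $q^{w}=e^{w\log q}$ for complex $w$. The $q$-Gamma function is $\Gamma_{q}(x)=(1-q)^{1-x}\frac{(q;q)_{\infty}}{(q^{x};q)_{\infty}}$ (with $(1-q)^{1-x}=e^{(1-x)\log(1-q)}$). The Jacobi theta function is $\vartheta_{4}(v\vert\tau)=\sum_{n=-\infty}^{\infty}p^{n^{2}}(-z)^{n}=(p^{2},pz,p/z;p^{2})_{\infty}$ where $z=e^{2\pi iv}$, $p=e^{\pi i\tau}$, $\Im(\tau)>0$. *)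

(* Defs.v *)
From Stdlib Require Import Reals ZArith.
From Coquelicot Require Import Coquelicot.
Open Scope R_scope.

Definition cexp (z : C) : C :=
  (exp (Re z) * cos (Im z), exp (Re z) * sin (Im z)).

Definition qpow (q : R) (w : C) : C := cexp (w * RtoC (ln q)).

Definition Clim (s : nat -> C) : C :=
  (real (Lim_seq (fun n => Re (s n))), real (Lim_seq (fun n => Im (s n)))).

Fixpoint qpoch_part (a : C) (q : R) (n : nat) : C :=
  match n with
  | O => RtoC 1
  | S m => Cmult (qpoch_part a q m) (Cminus (RtoC 1) (Cmult a (RtoC (q ^ m))))
  end.

Definition qpoch (a : C) (q : R) : C := Clim (qpoch_part a q).

(* q-Gamma: (1-q)^{1-x} (q;q)_oo / (q^x;q)_oo, with (1-q)^{1-x} = e^{(1-x) log(1-q)} *)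
Definition Gamma_q (q : R) (x : C) : C :=
  Cdiv (Cmult (cexp (Cmult (Cminus (RtoC 1) x) (RtoC (ln (1 - q)))))
              (qpoch (RtoC q) q))
       (qpoch (qpow q x) q).

(* n-th term of the theta series: p^{n^2} (-z)^n with p = e^{pi i tau}, z = e^{2 pi i v},
   i.e. (-1)^n e^{pi i tau n^2 + 2 pi i v n} *)
Definition theta4_term (v tau : C) (n : Z) : C :=
  Cmult (RtoC (powerRZ (-1) n))
        (cexp (Cplus (Cmult (Cmult (Cmult (RtoC PI) Ci) tau) (RtoC (IZR (n * n))))
                     (Cmult (Cmult (Cmult (RtoC (2 * PI)) Ci) v) (RtoC (IZR n))))).

(* symmetric partial sum  sum_{n=-N}^{N} *)
Fixpoint theta4_aux (v tau : C) (N : nat) (k : nat) : C :=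
  match k with
  | O => RtoC 0
  | S j => Cplus (theta4_aux v tau N j)
                 (theta4_term v tau (Z.of_nat j - Z.of_nat N)%Z)
  end.

Definition theta4_part (v tau : C) (N : nat) : C :=
  theta4_aux v tau N (2 * N + 1).

Definition theta4 (v tau : C) : C := Clim (theta4_part v tau).

(* Main.v *)
Require Import Defs.
From Stdlib Require Import Reals ZArith Lra Lia.
From Coquelicot Require Import Coquelicot.
Open Scope R_scope.

Fixpoint rsum (f : nat -> R) (n : nat) : R :=
  match n with O => 0 | S m => rsum f m + f m end.
Fixpoint rprod (f : nat -> R) (n : nat) : R :=
  match n with O => 1 | S m => rprod f m * f m end.
Fixpoint csum (f : nat -> C) (n : nat) : C :=
  match n with O => RtoC 0 | S m => Cplus (csum f m) (f m) end.
Fixpoint cprod (f : nat -> C) (n : nat) : C :=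
  match n with O => RtoC 1 | S m => Cmult (cprod f m) (f m) end.
Fixpoint cpow (y : C) (k : nat) : C :=
  match k with O => RtoC 1 | S m => Cmult (cpow y m) y end.

Ltac cring0 := repeat match goal with c : C |- _ => destruct c end;
  unfold Cminus, Cplus, Cmult, Copp, RtoC; simpl; f_equal; ring.
Ltac cring := first [ring | cring0].

Lemma csum_ext f g n : (forall k, (k < n)%nat -> f k = g k) -> csum f n = csum g n.
Proof. induction n; intros H; simpl; auto. rewrite IHn, H; auto. Qed.
Lemma cprod_ext f g n : (forall k, (k < n)%nat -> f k = g k) -> cprod f n = cprod g n.
Proof. induction n; intros H; simpl; auto. rewrite IHn, H; auto. Qed.
Lemma rsum_ext f g n : (forall k, (k < n)%nat -> f k = g k) -> rsum f n = rsum g n.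
Proof. induction n; intros H; simpl; auto. rewrite IHn, H; auto. Qed.
Lemma rprod_ext f g n : (forall k, (k < n)%nat -> f k = g k) -> rprod f n = rprod g n.
Proof. induction n; intros H; simpl; auto. rewrite IHn, H; auto. Qed.

Lemma csum_shift f n : csum f (S n) = Cplus (f O) (csum (fun k => f (S k)) n).
Proof. induction n. simpl. cring. simpl in *. rewrite IHn. cring. Qed.
Lemma cprod_shift f n : cprod f (S n) = Cmult (f O) (cprod (fun k => f (S k)) n).
Proof. induction n. simpl. cring. simpl in *. rewrite IHn. cring. Qed.
Lemma rsum_shift f n : rsum f (S n) = f O + rsum (fun k => f (S k)) n.
Proof. induction n. simpl. ring. simpl in *. rewrite IHn. ring. Qed.

Lemma csum_plus f g n : csum (fun k => Cplus (f k) (g k)) n = Cplus (csum f n) (csum g n).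
Proof. induction n; simpl. cring. rewrite IHn. cring. Qed.
Lemma csum_scal a f n : csum (fun k => Cmult a (f k)) n = Cmult a (csum f n).
Proof. induction n; simpl. cring. rewrite IHn. cring. Qed.
Lemma cprod_mult f g n : cprod (fun k => Cmult (f k) (g k)) n = Cmult (cprod f n) (cprod g n).
Proof. induction n; simpl. cring. rewrite IHn. cring. Qed.
Lemma cprod_add f a b : cprod f (a + b) = Cmult (cprod f a) (cprod (fun m => f (a + m)%nat) b).
Proof. induction b; simpl. rewrite Nat.add_0_r. cring. rewrite Nat.add_succ_r. simpl. rewrite IHb. cring. Qed.

Lemma cprod_rev f n : cprod f n = cprod (fun m => f (n - 1 - m)%nat) n.
Proof.
  revert f; induction n; intros f. reflexivity.
  rewrite (cprod_shift (fun m => f (S n - 1 - m)%nat)).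
  change (cprod f (S n)) with (Cmult (cprod f n) (f n)).
  rewrite (IHn f).
  replace (S n - 1 - 0)%nat with n by lia.
  rewrite (cprod_ext (fun k => f (S n - 1 - S k)%nat) (fun m => f (n - 1 - m)%nat)).
  2:{ intros k Hk. f_equal. lia. }
  ring.
Qed.
Lemma rsum_rev f n : rsum f n = rsum (fun m => f (n - 1 - m)%nat) n.
Proof.
  revert f; induction n; intros f. reflexivity.
  rewrite (rsum_shift (fun m => f (S n - 1 - m)%nat)).
  change (rsum f (S n)) with (rsum f n + f n).
  rewrite (IHn f).
  replace (S n - 1 - 0)%nat with n by lia.
  rewrite (rsum_ext (fun k => f (S n - 1 - S k)%nat) (fun m => f (n - 1 - m)%nat)).
  2:{ intros k Hk. f_equal. lia. }
  ring.
Qed.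

Lemma fst_csum f n : fst (csum f n) = rsum (fun k => fst (f k)) n.
Proof. induction n; simpl; auto. rewrite IHn. auto. Qed.
Lemma snd_csum f n : snd (csum f n) = rsum (fun k => snd (f k)) n.
Proof. induction n; simpl; auto. rewrite IHn. auto. Qed.
Lemma cprod_RtoC f n : cprod (fun k => RtoC (f k)) n = RtoC (rprod f n).
Proof. induction n; simpl; auto. rewrite IHn. cring. Qed.

Lemma rsum_plus f g n : rsum (fun k => f k + g k) n = rsum f n + rsum g n.
Proof. induction n; simpl. ring. rewrite IHn. ring. Qed.
Lemma rsum_scal a f n : rsum (fun k => a * f k) n = a * rsum f n.
Proof. induction n; simpl. ring. rewrite IHn. ring. Qed.
Lemma rsum_le f g n : (forall k, (k < n)%nat -> f k <= g k) -> rsum f n <= rsum g n.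
Proof. induction n; intros H; simpl. lra. assert (f n <= g n) by auto. assert (rsum f n <= rsum g n) by auto. lra. Qed.
Lemma rsum_abs f n : Rabs (rsum f n) <= rsum (fun k => Rabs (f k)) n.
Proof. induction n; simpl. rewrite Rabs_R0; lra. eapply Rle_trans. apply Rabs_triang. lra. Qed.
Lemma rprod_nonneg f n : (forall k, (k < n)%nat -> 0 <= f k) -> 0 <= rprod f n.
Proof. induction n; intros H; simpl. lra. apply Rmult_le_pos; auto. Qed.
Lemma rprod_pos f n : (forall k, (k < n)%nat -> 0 < f k) -> 0 < rprod f n.
Proof. induction n; intros H; simpl. lra. apply Rmult_lt_0_compat; auto. Qed.
Lemma rprod_le f g n : (forall k, (k < n)%nat -> 0 <= f k <= g k) -> rprod f n <= rprod g n.
Proof.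
  induction n; intros H; simpl. lra.
  assert (0 <= rprod f n) by (apply rprod_nonneg; intros; apply H; lia).
  assert (rprod f n <= rprod g n) by auto. assert (0 <= f n <= g n) by auto.
  apply Rmult_le_compat; lra.
Qed.
Lemma rprod_add f a b : rprod f (a + b) = rprod f a * rprod (fun m => f (a + m)%nat) b.
Proof. induction b; simpl. rewrite Nat.add_0_r. ring. rewrite Nat.add_succ_r. simpl. rewrite IHb. ring. Qed.
Lemma rsum_geom p n : 0 <= p < 1 -> rsum (fun k => p ^ k) n <= / (1 - p).
Proof.
  intros Hp. assert (H : rsum (fun k => p ^ k) n = (1 - p ^ n) / (1 - p)).
  { induction n; simpl. field; lra. rewrite IHn. field; lra. }
  rewrite H. assert (0 <= p ^ n) by (apply pow_le; lra).
  unfold Rdiv. rewrite <- (Rmult_1_l (/ (1 - p))) at 2.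
  apply Rmult_le_compat_r. apply Rlt_le, Rinv_0_lt_compat; lra. lra.
Qed.

Definition Pq (Q : R) (n : nat) := rprod (fun i => 1 - Q ^ (S i)) n.
Definition G (Q : R) (n k : nat) :=
  if Nat.leb k n then Pq Q n / (Pq Q k * Pq Q (n - k)) else 0.
Fixpoint tri (k : nat) : nat := match k with O => O | S m => (tri m + m)%nat end.

Lemma pow_lt1 Q k : 0 <= Q < 1 -> Q ^ (S k) < 1.
Proof. intros. apply pow_lt_1_compat; [lra | lia]. Qed.

Lemma Pq_pos Q n : 0 <= Q < 1 -> 0 < Pq Q n.
Proof. intros HQ. unfold Pq. apply rprod_pos. intros k _. pose proof (pow_lt1 Q k HQ). lra. Qed.

Lemma Pq_S Q n : Pq Q (S n) = Pq Q n * (1 - Q ^ (S n)).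
Proof. reflexivity. Qed.
Lemma Pq_0 Q : Pq Q 0 = 1.
Proof. reflexivity. Qed.

Lemma G_over Q n k : (n < k)%nat -> G Q n k = 0.
Proof. intros H. unfold G. destruct (Nat.leb_spec k n). lia. auto. Qed.
Lemma G_n0 Q n : 0 <= Q < 1 -> G Q n 0 = 1.
Proof. intros HQ. unfold G. simpl. rewrite Nat.sub_0_r. unfold Pq at 2. simpl.
  pose proof (Pq_pos Q n HQ). field. lra. Qed.

Lemma G_pascal Q n k : 0 <= Q < 1 -> (k <= n)%nat ->
  G Q (S n) (S k) = G Q n (S k) + Q ^ (n - k) * G Q n k.
Proof.
  intros HQ Hk. destruct (Nat.eq_dec k n) as [->|Hne].
  - rewrite (G_over Q n (S n)) by lia. unfold G.
    rewrite !Nat.leb_refl. replace (S n - S n)%nat with O by lia. replace (n - n)%nat with O by lia.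
    rewrite Pq_0, Pq_S. simpl pow at 3.
    pose proof (Pq_pos Q n HQ). pose proof (pow_lt1 Q n HQ). field. lra.
  - assert (exists m, n = (k + S m)%nat) as [m ->] by (exists (n - k - 1)%nat; lia).
    unfold G.
    replace (Nat.leb (S k) (S (k + S m))) with true by (symmetry; apply Nat.leb_le; lia).
    replace (Nat.leb (S k) (k + S m)) with true by (symmetry; apply Nat.leb_le; lia).
    replace (Nat.leb k (k + S m)) with true by (symmetry; apply Nat.leb_le; lia).
    replace (S (k + S m) - S k)%nat with (S m) by lia.
    replace (k + S m - S k)%nat with m by lia.
    replace (k + S m - k)%nat with (S m) by lia.
    rewrite !Pq_S.
    replace (S (k + S m)) with (S k + S m)%nat by lia. rewrite pow_add.
    pose proof (Pq_pos Q (k + S m) HQ). pose proof (Pq_pos Q k HQ). pose proof (Pq_pos Q m HQ).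
    pose proof (pow_lt1 Q k HQ). pose proof (pow_lt1 Q m HQ).
    set (a := Q ^ S k) in *. set (b := Q ^ S m) in *.
    field. repeat split; lra.
Qed.

Lemma qbin Q y n : 0 <= Q < 1 ->
  cprod (fun m => Cplus (RtoC 1) (Cmult y (RtoC (Q ^ m)))) n =
  csum (fun k => Cmult (RtoC (G Q n k * Q ^ tri k)) (cpow y k)) (S n).
Proof.
  intros HQ. induction n.
  - simpl. rewrite G_n0 by auto. cring.
  - change (cprod (fun m => Cplus (RtoC 1) (Cmult y (RtoC (Q ^ m)))) (S n)) with
      (Cmult (cprod (fun m => Cplus (RtoC 1) (Cmult y (RtoC (Q ^ m)))) n) (Cplus (RtoC 1) (Cmult y (RtoC (Q ^ n))))).
    rewrite IHn.
    set (c := fun k => Cmult (RtoC (G Q n k * Q ^ tri k)) (cpow y k)).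
    rewrite (csum_shift (fun k => Cmult (RtoC (G Q (S n) k * Q ^ tri k)) (cpow y k))).
    rewrite (csum_ext (fun k => Cmult (RtoC (G Q (S n) (S k) * Q ^ tri (S k))) (cpow y (S k)))
       (fun k => Cplus (c (S k)) (Cmult (Cmult y (RtoC (Q ^ n))) (c k)))).
    2:{ intros k Hk. unfold c. rewrite G_pascal by (auto; lia). simpl tri. simpl cpow.
        rewrite pow_add. replace (Q ^ n) with (Q ^ (n - k) * Q ^ k).
        2:{ rewrite <- pow_add. f_equal. lia. }
        generalize (cpow y k). intros w. cring. }
    rewrite csum_plus, csum_scal.
    rewrite G_n0 by auto.
    assert (E : Cplus (c O) (csum (fun k => c (S k)) (S n)) = csum c (S n)).
    { rewrite <- csum_shift. change (csum c (S (S n))) with (Cplus (csum c (S n)) (c (S n))).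
      replace (c (S n)) with (RtoC 0). ring.
      unfold c. rewrite G_over by lia. generalize (cpow y (S n)). intros. cring. }
    unfold c at 1 in E. rewrite G_n0 in E by auto.
    replace (Cplus (Cmult (RtoC (1 * Q ^ tri 0)) (cpow y 0))
      (Cplus (csum (fun k : nat => c (S k)) (S n)) (Cmult (Cmult y (RtoC (Q ^ n))) (csum c (S n)))))
      with (Cplus (Cplus (Cmult (RtoC (1 * Q ^ tri 0)) (cpow y 0)) (csum (fun k : nat => c (S k)) (S n)))
             (Cmult (Cmult y (RtoC (Q ^ n))) (csum c (S n)))) by ring.
    rewrite E. ring.
Qed.

Definition E (phi : R) : C := (cos phi, sin phi).
Definition F (phi x : R) : C := Cminus (RtoC 1) (Cmult (RtoC x) (E phi)).

Lemma E_mult a b : Cmult (E a) (E b) = E (a + b).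
Proof. unfold E, Cmult. simpl. rewrite cos_plus, sin_plus. f_equal; ring. Qed.

Lemma RE_mult a b c d :
  Cmult (Cmult (RtoC a) (E b)) (Cmult (RtoC c) (E d)) = Cmult (RtoC (a * c)) (E (b + d)).
Proof.
  rewrite <- E_mult. generalize (E b) (E d). intros. cring.
Qed.

Lemma exp_pow a k : exp a ^ k = exp (a * INR k).
Proof.
  induction k. simpl. rewrite Rmult_0_r, exp_0. auto.
  simpl pow. rewrite IHk, S_INR, <- exp_plus. f_equal. ring.
Qed.

Lemma cpow_RE r phi k :
  cpow (Cmult (RtoC r) (E phi)) k = Cmult (RtoC (r ^ k)) (E (INR k * phi)).
Proof.
  induction k.
  - simpl. unfold E. rewrite Rmult_0_l, cos_0, sin_0. cring.
  - change (cpow (Cmult (RtoC r) (E phi)) (S k)) with (Cmult (cpow (Cmult (RtoC r) (E phi)) k) (Cmult (RtoC r) (E phi))).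
    rewrite IHk, RE_mult. rewrite S_INR. simpl pow. f_equal. f_equal. ring. f_equal. ring.
Qed.

Lemma F_conj phi x : Cmult (F phi x) (F (- phi) x) = RtoC (1 - 2 * x * cos phi + x ^ 2).
Proof.
  unfold F, E, Cminus, Cplus, Cmult, Copp, RtoC. simpl. rewrite cos_neg, sin_neg.
  pose proof (sin2_cos2 phi). unfold Rsqr in H. f_equal; nra.
Qed.

Lemma F_flip phi a b : a * b = 1 ->
  Cmult (F phi a) (Cmult (RtoC (- b)) (E (- phi))) = F (- phi) b.
Proof.
  intros Hab.
  unfold F, E, Cminus, Cplus, Cmult, Copp, RtoC. simpl. rewrite !cos_neg, !sin_neg.
  pose proof (sin2_cos2 phi). unfold Rsqr in H. f_equal; nra.
Qed.

Lemma W_prod s phi N :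
  cprod (fun m => Cmult (RtoC (- exp (s * (2 * INR m + 1)))) (E (- phi))) N =
  Cmult (RtoC ((-1) ^ N * exp (s * INR N ^ 2))) (E (- INR N * phi)).
Proof.
  induction N.
  - simpl. unfold E. replace (- 0 * phi) with 0 by ring. rewrite Rmult_0_l, cos_0, sin_0. replace (s * 0) with 0 by ring. rewrite exp_0. cring.
  - change (cprod (fun m => Cmult (RtoC (- exp (s * (2 * INR m + 1)))) (E (- phi))) (S N)) with
     (Cmult (cprod (fun m => Cmult (RtoC (- exp (s * (2 * INR m + 1)))) (E (- phi))) N)
            (Cmult (RtoC (- exp (s * (2 * INR N + 1)))) (E (- phi)))).
    rewrite IHN, RE_mult. rewrite S_INR. f_equal. f_equal.
    replace (s * (INR N + 1) ^ 2) with (s * INR N ^ 2 + s * (2 * INR N + 1)) by ring.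
    rewrite exp_plus. simpl pow. ring. f_equal. ring.
Qed.

Lemma tri_INR k : 2 * INR (tri k) = INR k * (INR k - 1).
Proof.
  induction k. simpl. ring. simpl tri. rewrite plus_INR, S_INR. nra.
Qed.

Lemma RRE c d e : Cmult (RtoC c) (Cmult (RtoC d) (E e)) = Cmult (RtoC (c * d)) (E e).
Proof. generalize (E e). intros. cring. Qed.
Lemma fst_RE r t : fst (Cmult (RtoC r) (E t)) = r * cos t.
Proof. unfold E, Cmult, RtoC. simpl. ring. Qed.
Lemma snd_RE r t : snd (Cmult (RtoC r) (E t)) = r * sin t.
Proof. unfold E, Cmult, RtoC. simpl. ring. Qed.

Lemma exp2s_Q s : s < 0 -> 0 <= exp (2 * s) < 1.
Proof. intros. split. left; apply exp_pos. rewrite <- exp_0. apply exp_increasing. lra. Qed.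

Lemma jtp s phi N : s < 0 ->
  rsum (fun j => G (exp (2 * s)) (2 * N) j *
     ((-1) ^ (j + N) * exp (s * (INR j - INR N) ^ 2) * cos ((INR j - INR N) * phi))) (S (2 * N))
  = rprod (fun k => 1 - 2 * exp (s * (2 * INR k + 1)) * cos phi + exp (s * (2 * INR k + 1)) ^ 2) N.
Proof.
  intros Hs. pose proof (exp2s_Q s Hs) as HQ.
  set (y := Cmult (RtoC (- exp (s * (1 - 2 * INR N)))) (E phi)).
  set (W := Cmult (RtoC ((-1) ^ N * exp (s * INR N ^ 2))) (E (- INR N * phi))).
  pose proof (qbin (exp (2 * s)) y (2 * N) HQ) as H.
  apply (f_equal (Cmult W)) in H.
  apply (f_equal fst) in H.
  rewrite <- csum_scal, fst_csum in H.
  assert (HL : Cmult W (cprod (fun m => Cplus (RtoC 1) (Cmult y (RtoC (exp (2 * s) ^ m)))) (2 * N))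
     = RtoC (rprod (fun k => 1 - 2 * exp (s * (2 * INR k + 1)) * cos phi + exp (s * (2 * INR k + 1)) ^ 2) N)).
  { rewrite (cprod_ext _ (fun m => F phi (exp (s * (2 * INR m + 1 - 2 * INR N))))).
    2:{ intros m _. unfold y, F. rewrite exp_pow.
        replace (exp (s * (2 * INR m + 1 - 2 * INR N))) with (exp (s * (1 - 2 * INR N)) * exp (2 * s * INR m)).
        2:{ rewrite <- exp_plus. f_equal. ring. }
        generalize (E phi). intros. cring. }
    replace (2 * N)%nat with (N + N)%nat by lia. rewrite cprod_add.
    rewrite (cprod_ext (fun m => F phi (exp (s * (2 * INR (N + m) + 1 - 2 * INR N))))
                       (fun m => F phi (exp (s * (2 * INR m + 1))))).
    2:{ intros m _. rewrite plus_INR. f_equal. f_equal. ring. }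
    unfold W. rewrite <- (W_prod s phi N).
    rewrite (cprod_rev (fun m => Cmult (RtoC (- exp (s * (2 * INR m + 1)))) (E (- phi)))).
    set (g' := fun m => Cmult (RtoC (- exp (s * (2 * INR (N - 1 - m)%nat + 1)))) (E (- phi))).
    set (f := fun m => F phi (exp (s * (2 * INR m + 1 - 2 * INR N)))).
    set (h := fun m => F phi (exp (s * (2 * INR m + 1)))).
    transitivity (Cmult (cprod (fun m => Cmult (f m) (g' m)) N) (cprod h N)).
    { rewrite cprod_mult. ring. }
    rewrite (cprod_ext (fun m => Cmult (f m) (g' m)) (fun m => F (- phi) (exp (s * (2 * INR (N - 1 - m)%nat + 1))))).
    2:{ intros m Hm. unfold f, g'. apply F_flip. rewrite <- exp_plus.
        rewrite !minus_INR by lia. simpl INR. replace (s * (2 * INR m + 1 - 2 * INR N) + s * (2 * (INR N - 1 - INR m) + 1)) with 0 by ring.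
        apply exp_0. }
    rewrite <- (cprod_rev (fun m => F (- phi) (exp (s * (2 * INR m + 1))))).
    rewrite <- cprod_mult. rewrite <- cprod_RtoC. apply cprod_ext. intros m _. unfold h.
    rewrite <- F_conj. ring. }
  rewrite HL in H. change (fst (RtoC ?r)) with r in H. rewrite H.
  apply rsum_ext. intros k Hk.
  unfold y, W. rewrite cpow_RE, RRE, RE_mult, fst_RE.
  replace (- INR N * phi + INR k * phi) with ((INR k - INR N) * phi) by ring.
  rewrite <- !Rmult_assoc. f_equal.
  replace (- exp (s * (1 - 2 * INR N))) with (-1 * exp (s * (1 - 2 * INR N))) by ring.
  rewrite Rpow_mult_distr, !exp_pow, pow_add.
  replace (exp (s * (INR k - INR N) ^ 2)) with
    (exp (s * INR N ^ 2) * exp (2 * s * INR (tri k)) * exp (s * (1 - 2 * INR N) * INR k)).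
  ring.
  rewrite <- !exp_plus. f_equal.
  replace (2 * s * INR (tri k)) with (s * (2 * INR (tri k))) by ring. rewrite tri_INR. ring.
Qed.

Lemma pow_le_dec x m n : 0 <= x <= 1 -> (m <= n)%nat -> x ^ n <= x ^ m.
Proof.
  intros Hx Hmn. replace n with (m + (n - m))%nat by lia. rewrite pow_add.
  assert (0 <= x ^ m) by (apply pow_le; lra).
  assert (x ^ (n - m) <= 1).
  { induction (n - m)%nat. simpl; lra. simpl. assert (0 <= x ^ n0) by (apply pow_le; lra). nra. }
  nra.
Qed.

Lemma rprod_mult f g n : rprod (fun k => f k * g k) n = rprod f n * rprod g n.
Proof. induction n; simpl. ring. rewrite IHn. ring. Qed.

Lemma rprod_le1 f n : (forall k, (k < n)%nat -> 0 <= f k <= 1) -> rprod f n <= 1.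
Proof.
  intros H. assert (E1 : rprod (fun _ => 1) n = 1) by (clear H; induction n; simpl; auto; rewrite IHn; ring).
  rewrite <- E1. apply rprod_le. auto.
Qed.

Lemma rprod_ge_sum a n : (forall k, (k < n)%nat -> 0 <= a k <= 1) ->
  1 - rsum a n <= rprod (fun k => 1 - a k) n.
Proof.
  induction n; intros H; simpl. lra.
  assert (0 <= rprod (fun k => 1 - a k) n <= 1).
  { split. apply rprod_nonneg. intros k Hk. specialize (H k ltac:(lia)). lra.
    apply rprod_le1. intros k Hk. specialize (H k ltac:(lia)). lra. }
  assert (1 - rsum a n <= rprod (fun k => 1 - a k) n) by (apply IHn; intros; apply H; lia).
  specialize (H n ltac:(lia)). nra.
Qed.

Lemma Pq_le1 Q n : 0 <= Q < 1 -> Pq Q n <= 1.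
Proof. intros HQ. unfold Pq. apply rprod_le1. intros k _. pose proof (pow_lt1 Q k HQ).
  assert (0 <= Q ^ S k) by (apply pow_le; lra). lra. Qed.

Lemma G_sym Q n j : (j <= n)%nat -> G Q n j = G Q n (n - j).
Proof.
  intros H. unfold G. replace (Nat.leb j n) with true by (symmetry; apply Nat.leb_le; lia).
  replace (Nat.leb (n - j) n) with true by (symmetry; apply Nat.leb_le; lia).
  replace (n - (n - j))%nat with j by lia. rewrite Rmult_comm. auto.
Qed.

Lemma G_pos Q n j : 0 <= Q < 1 -> (j <= n)%nat -> 0 < G Q n j.
Proof.
  intros HQ H. unfold G. replace (Nat.leb j n) with true by (symmetry; apply Nat.leb_le; lia).
  pose proof (Pq_pos Q n HQ). pose proof (Pq_pos Q j HQ). pose proof (Pq_pos Q (n - j) HQ).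
  apply Rdiv_lt_0_compat; auto. apply Rmult_lt_0_compat; auto.
Qed.

Definition rr Q N j := G Q (2 * N) j / G Q (2 * N) N.

Lemma r_bound Q N j : 0 <= Q < 1 -> (j <= N)%nat ->
  0 <= 1 - rr Q N j <= Q ^ (S j) / (1 - Q).
Proof.
  intros HQ HjN.
  assert (exists m, N = (j + m)%nat) as [m ->] by (exists (N - j)%nat; lia).
  unfold rr, G.
  replace (Nat.leb j (2 * (j + m))) with true by (symmetry; apply Nat.leb_le; lia).
  replace (Nat.leb (j + m) (2 * (j + m))) with true by (symmetry; apply Nat.leb_le; lia).
  replace (2 * (j + m) - (j + m))%nat with (j + m)%nat by lia.
  replace (2 * (j + m) - j)%nat with ((j + m) + m)%nat by lia.
  assert (HX : Pq Q (j + m) = Pq Q j * rprod (fun i => 1 - Q ^ S (j + i)) m) by (unfold Pq; apply rprod_add).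
  assert (HY : Pq Q (j + m + m) = Pq Q (j + m) * rprod (fun i => 1 - Q ^ S (j + m + i)) m) by (unfold Pq; apply rprod_add).
  set (X := rprod (fun i => 1 - Q ^ S (j + i)) m) in *.
  set (Y := rprod (fun i => 1 - Q ^ S (j + m + i)) m) in *.
  pose proof (Pq_pos Q (2 * (j + m)) HQ). pose proof (Pq_pos Q j HQ). pose proof (Pq_pos Q (j + m) HQ).
  assert (HXpos : 0 < X). { unfold X. apply rprod_pos. intros k _. pose proof (pow_lt1 Q (j + k) HQ). lra. }
  assert (HXY : X <= Y).
  { unfold X, Y. apply rprod_le. intros k _. pose proof (pow_lt1 Q (j + k) HQ).
    assert (Q ^ S (j + m + k) <= Q ^ S (j + k)) by (apply pow_le_dec; [lra | lia]). lra. }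
  assert (HY1 : Y <= 1).
  { unfold Y. apply rprod_le1. intros k _. pose proof (pow_lt1 Q (j + m + k) HQ).
    assert (0 <= Q ^ S (j + m + k)) by (apply pow_le; lra). lra. }
  assert (HXs : 1 - Q ^ S j / (1 - Q) <= X).
  { unfold X. eapply Rle_trans. 2: apply rprod_ge_sum.
    - assert (rsum (fun i => Q ^ S (j + i)) m <= Q ^ S j / (1 - Q)).
      { rewrite (rsum_ext _ (fun i => Q ^ S j * Q ^ i)).
        rewrite rsum_scal. unfold Rdiv. apply Rmult_le_compat_l. apply pow_le; lra.
        apply rsum_geom; auto.
        intros. rewrite <- pow_add. f_equal. }
      lra.
    - intros k _. pose proof (pow_lt1 Q (j + k) HQ). assert (0 <= Q ^ S (j + k)) by (apply pow_le; lra). lra. }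
  assert (Hr : Pq Q (2 * (j + m)) / (Pq Q j * Pq Q (j + m + m)) / (Pq Q (2 * (j + m)) / (Pq Q (j + m) * Pq Q (j + m))) = X / Y).
  { rewrite HY, HX. field. repeat split; lra. }
  rewrite Hr.
  assert (X / Y <= 1). { apply Rmult_le_reg_r with Y. lra. unfold Rdiv. rewrite Rmult_assoc, Rinv_l; lra. }
  assert (X <= X / Y). { apply Rmult_le_reg_r with Y. lra. unfold Rdiv. rewrite Rmult_assoc, Rinv_l by lra. nra. }
  lra.
Qed.

Definition tt s N phi j := (-1) ^ (j + N) * exp (s * (INR j - INR N) ^ 2) * cos ((INR j - INR N) * phi).

Lemma exp_le a b : a <= b -> exp a <= exp b.
Proof. intros H. destruct (Req_dec a b). subst; lra. left. apply exp_increasing. lra. Qed.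

Lemma exp_sq_le s d : s < 0 -> exp (s * INR d ^ 2) <= exp s ^ d.
Proof.
  intros Hs. rewrite exp_pow. apply exp_le. destruct d. simpl. lra.
  rewrite S_INR. pose proof (pos_INR d). nra.
Qed.

Lemma tt_abs_le s N phi j : s < 0 -> Rabs (tt s N phi j) <= exp (s * (INR j - INR N) ^ 2).
Proof.
  intros Hs. unfold tt. rewrite !Rabs_mult, pow_1_abs, (Rabs_pos_eq (exp _)) by (left; apply exp_pos).
  pose proof (COS_bound ((INR j - INR N) * phi)). pose proof (exp_pos (s * (INR j - INR N) ^ 2)).
  assert (Rabs (cos ((INR j - INR N) * phi)) <= 1) by (apply Rabs_le; lra). nra.
Qed.

Lemma tt_abs1 s N phi j : s < 0 -> (j <= N)%nat -> Rabs (tt s N phi j) <= exp s ^ (N - j).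
Proof.
  intros Hs H. eapply Rle_trans. apply tt_abs_le; auto.
  replace ((INR j - INR N) ^ 2) with (INR (N - j) ^ 2). apply exp_sq_le; auto.
  rewrite minus_INR by lia. ring.
Qed.
Lemma tt_abs2 s N phi j : s < 0 -> (N <= j)%nat -> Rabs (tt s N phi j) <= exp s ^ (j - N).
Proof.
  intros Hs H. eapply Rle_trans. apply tt_abs_le; auto.
  replace ((INR j - INR N) ^ 2) with (INR (j - N) ^ 2). apply exp_sq_le; auto.
  rewrite minus_INR by lia. ring.
Qed.

Lemma exp2s s : exp (2 * s) = exp s ^ 2.
Proof. rewrite exp_pow. f_equal. simpl. ring. Qed.

Lemma err_point s N phi j : s < 0 -> (j <= 2 * N)%nat ->
  Rabs (rr (exp (2 * s)) N j - 1) * Rabs (tt s N phi j) <=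
  exp s ^ N / (1 - exp (2 * s)) * (exp s ^ j + exp s ^ (2 * N - j)).
Proof.
  intros Hs Hj. pose proof (exp2s_Q s Hs) as HQ.
  assert (Hp : 0 < exp s < 1). { split. apply exp_pos. rewrite <- exp_0. apply exp_increasing. lra. }
  set (p := exp s) in *. set (Q := exp (2 * s)) in *.
  assert (HQp : Q = p ^ 2) by (unfold Q, p; apply exp2s).
  assert (Hpj : 0 <= p ^ j) by (apply pow_le; lra).
  assert (Hpj' : 0 <= p ^ (2 * N - j)) by (apply pow_le; lra).
  assert (HpN : 0 <= p ^ N) by (apply pow_le; lra).
  assert (H1Q : 0 < 1 - Q) by lra.
  destruct (le_lt_dec j N) as [HjN | HjN].
  - pose proof (r_bound Q N j HQ HjN) as Hr.
    pose proof (tt_abs1 s N phi j Hs HjN) as Ht.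
    rewrite Rabs_minus_sym, (Rabs_pos_eq (1 - _)) by lra.
    assert (Q ^ S j * p ^ (N - j) <= p ^ N * p ^ j).
    { rewrite HQp, <- pow_mult, <- !pow_add. apply pow_le_dec. lra. lia. }
    apply Rle_trans with (Q ^ S j / (1 - Q) * p ^ (N - j)).
    apply Rmult_le_compat; auto using Rabs_pos; lra.
    pose proof (Rinv_0_lt_compat (1 - Q) H1Q). unfold Rdiv. set (iv := / (1 - Q)) in *.
    match goal with |- ?A * _ * ?B <= _ => 
      assert (iv * (A * B) <= iv * (p ^ N * p ^ j)) by (apply Rmult_le_compat_l; lra) end.
    assert (0 <= iv * (p ^ N * p ^ (2 * N - j))) by (apply Rmult_le_pos; [lra | apply Rmult_le_pos; lra]).
    nra.
  - assert (Hsym : rr Q N j = rr Q N (2 * N - j)) by (unfold rr; rewrite G_sym by lia; auto).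
    pose proof (r_bound Q N (2 * N - j) HQ ltac:(lia)) as Hr.
    pose proof (tt_abs2 s N phi j Hs ltac:(lia)) as Ht.
    rewrite Hsym, Rabs_minus_sym, (Rabs_pos_eq (1 - _)) by lra.
    assert (Q ^ S (2 * N - j) * p ^ (j - N) <= p ^ N * p ^ (2 * N - j)).
    { rewrite HQp, <- pow_mult, <- !pow_add. apply pow_le_dec. lra. lia. }
    apply Rle_trans with (Q ^ S (2 * N - j) / (1 - Q) * p ^ (j - N)).
    apply Rmult_le_compat; auto using Rabs_pos; lra.
    pose proof (Rinv_0_lt_compat (1 - Q) H1Q). unfold Rdiv. set (iv := / (1 - Q)) in *.
    match goal with |- ?A * _ * ?B <= _ => 
      assert (iv * (A * B) <= iv * (p ^ N * p ^ (2 * N - j))) by (apply Rmult_le_compat_l; lra) end.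
    assert (0 <= iv * (p ^ N * p ^ j)) by (apply Rmult_le_pos; [lra | apply Rmult_le_pos; lra]).
    nra.
Qed.

Lemma rsum_minus f g n : rsum f n - rsum g n = rsum (fun k => f k - g k) n.
Proof. induction n; simpl. ring. rewrite <- IHn. ring. Qed.

Definition UU s N phi := rsum (fun j => rr (exp (2 * s)) N j * tt s N phi j) (S (2 * N)).
Definition SS s N phi := rsum (tt s N phi) (S (2 * N)).

Lemma err_total s N phi : s < 0 ->
  Rabs (UU s N phi - SS s N phi) <= 2 * exp s ^ N / ((1 - exp (2 * s)) * (1 - exp s)).
Proof.
  intros Hs. pose proof (exp2s_Q s Hs) as HQ.
  assert (Hp : 0 < exp s < 1). { split. apply exp_pos. rewrite <- exp_0. apply exp_increasing. lra. }
  unfold UU, SS. rewrite rsum_minus.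
  eapply Rle_trans. apply rsum_abs.
  eapply Rle_trans. apply rsum_le with
    (g := fun j => exp s ^ N / (1 - exp (2 * s)) * (exp s ^ j + exp s ^ (2 * N - j))).
  { intros k Hk. replace (rr (exp (2 * s)) N k * tt s N phi k - tt s N phi k) with
      ((rr (exp (2 * s)) N k - 1) * tt s N phi k) by ring.
    rewrite Rabs_mult. apply err_point; auto. lia. }
  rewrite rsum_scal, rsum_plus.
  assert (H2 : rsum (fun j => exp s ^ (2 * N - j)) (S (2 * N)) = rsum (fun j => exp s ^ j) (S (2 * N))).
  { rewrite rsum_rev. apply rsum_ext. intros k Hk. f_equal. lia. }
  rewrite H2.
  pose proof (rsum_geom (exp s) (S (2 * N)) ltac:(lra)).
  assert (0 <= exp s ^ N / (1 - exp (2 * s))).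
  { apply Rmult_le_pos. apply pow_le; lra. left; apply Rinv_0_lt_compat; lra. }
  apply Rle_trans with (exp s ^ N / (1 - exp (2 * s)) * (2 * / (1 - exp s))).
  apply Rmult_le_compat_l; auto.
  change (rsum (pow (exp s)) (S (2 * N))) with (rsum (fun j => exp s ^ j) (S (2 * N))). lra.
  right. field. split; lra.
Qed.

Definition Pr s N phi :=
  rprod (fun k => 1 - 2 * exp (s * (2 * INR k + 1)) * cos phi + exp (s * (2 * INR k + 1)) ^ 2) N.

Lemma UU_eq s N phi : s < 0 -> UU s N phi = Pr s N phi / G (exp (2 * s)) (2 * N) N.
Proof.
  intros Hs. unfold Pr. rewrite <- jtp by auto. unfold UU, rr.
  unfold Rdiv. rewrite (Rmult_comm (rsum _ _)), <- rsum_scal. apply rsum_ext. intros. unfold tt. ring.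
Qed.

Lemma UU_mono s N phi : s < 0 -> UU s N 0 <= UU s N phi.
Proof.
  intros Hs. rewrite !UU_eq by auto. pose proof (exp2s_Q s Hs).
  pose proof (G_pos (exp (2 * s)) (2 * N) N H ltac:(lia)).
  unfold Rdiv. apply Rmult_le_compat_r. left; apply Rinv_0_lt_compat; auto.
  unfold Pr. apply rprod_le. intros k _. rewrite cos_0.
  pose proof (exp_pos (s * (2 * INR k + 1))). pose proof (COS_bound phi).
  set (e := exp (s * (2 * INR k + 1))) in *. split.
  replace (1 - 2 * e * 1 + e ^ 2) with ((1 - e) ^ 2) by ring. apply pow2_ge_0. nra.
Qed.

Lemma prod_lb x b N : 0 <= x < 1 -> 0 <= b < 1 ->
  exp (- (x / ((1 - x) * (1 - b)))) <= rprod (fun k => 1 - x * b ^ k) N.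
Proof.
  intros Hx Hb.
  assert (H : forall N, exp (- (x / (1 - x) * rsum (fun k => b ^ k) N)) <= rprod (fun k => 1 - x * b ^ k) N).
  { induction N0; simpl.
    - rewrite Rmult_0_r, Ropp_0, exp_0. lra.
    - replace (- (x / (1 - x) * (rsum (fun k => b ^ k) N0 + b ^ N0))) with
        (- (x / (1 - x) * rsum (fun k => b ^ k) N0) + - (x * b ^ N0 / (1 - x))) by (field; lra).
      rewrite exp_plus. set (y := x * b ^ N0).
      assert (Hy : 0 <= y <= x). { unfold y. assert (0 <= b ^ N0 <= 1).
        split. apply pow_le; lra. pose proof (pow_le_dec b O N0 ltac:(lra) ltac:(lia)). simpl in H; lra. nra. }
      assert (exp (- (y / (1 - x))) <= 1 - y).
      { pose proof (exp_ineq1_le (y / (1 - x))).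
        rewrite exp_Ropp. pose proof (exp_pos (y / (1 - x))).
        apply Rmult_le_reg_r with (exp (y / (1 - x))); auto.
        rewrite Rinv_l by lra.
        assert (1 <= (1 - y) * (1 + y / (1 - x))).
        { replace ((1 - y) * (1 + y / (1 - x))) with (1 + y * (x - y) / (1 - x)) by (field; lra).
          assert (0 <= y * (x - y) / (1 - x)). { apply Rmult_le_pos. nra. left; apply Rinv_0_lt_compat; lra. }
          lra. }
        nra. }
      pose proof (exp_pos (- (x / (1 - x) * rsum (fun k => b ^ k) N0))).
      pose proof (exp_pos (- (y / (1 - x)))).
      apply Rmult_le_compat; lra. }
  eapply Rle_trans. 2: apply H. apply exp_le.
  pose proof (rsum_geom b N Hb).
  assert (0 <= x / (1 - x)) by (apply Rmult_le_pos; [lra | left; apply Rinv_0_lt_compat; lra]).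
  replace (x / ((1 - x) * (1 - b))) with (x / (1 - x) * / (1 - b)) by (field; lra).
  apply Ropp_le_contravar. apply Rmult_le_compat_l; auto.
Qed.

Definition delta s := (exp (- (exp s / ((1 - exp s) * (1 - exp (2 * s))))) *
                       exp (- (exp (2 * s) / ((1 - exp (2 * s)) * (1 - exp (2 * s)))))) ^ 2.

Lemma delta_pos s : 0 < delta s.
Proof. unfold delta. apply pow_lt. apply Rmult_lt_0_compat; apply exp_pos. Qed.

Lemma UU_lb s N : s < 0 -> delta s <= UU s N 0.
Proof.
  intros Hs. pose proof (exp2s_Q s Hs) as HQ.
  assert (Hp : 0 < exp s < 1). { split. apply exp_pos. rewrite <- exp_0. apply exp_increasing. lra. }
  rewrite UU_eq by auto.
  set (A := rprod (fun k => 1 - exp s * exp (2 * s) ^ k) N).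
  assert (HA : Pr s N 0 = A * A).
  { unfold Pr, A. rewrite <- rprod_mult. apply rprod_ext. intros k _.
    rewrite cos_0, (exp_pow (2 * s) k). replace (exp (s * (2 * INR k + 1))) with (exp s * exp (2 * s * INR k)).
    ring. rewrite <- exp_plus. f_equal. ring. }
  assert (HG : G (exp (2 * s)) (2 * N) N = Pq (exp (2 * s)) (2 * N) / (Pq (exp (2 * s)) N * Pq (exp (2 * s)) N)).
  { unfold G. replace (Nat.leb N (2 * N)) with true by (symmetry; apply Nat.leb_le; lia).
    replace (2 * N - N)%nat with N by lia. auto. }
  rewrite HA, HG.
  set (P := Pq (exp (2 * s)) N).
  pose proof (Pq_pos _ (2 * N) HQ). pose proof (Pq_le1 _ (2 * N) HQ).
  assert (HP : exp (- (exp (2 * s) / ((1 - exp (2 * s)) * (1 - exp (2 * s))))) <= P).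
  { unfold P, Pq. rewrite (rprod_ext _ (fun k => 1 - exp (2 * s) * exp (2 * s) ^ k)) by auto.
    apply prod_lb; auto. }
  assert (HA1 : exp (- (exp s / ((1 - exp s) * (1 - exp (2 * s))))) <= A).
  { apply prod_lb; auto. lra. }
  pose proof (exp_pos (- (exp (2 * s) / ((1 - exp (2 * s)) * (1 - exp (2 * s)))))).
  pose proof (exp_pos (- (exp s / ((1 - exp s) * (1 - exp (2 * s)))))).
  unfold delta.
  set (c1 := exp (- (exp s / ((1 - exp s) * (1 - exp (2 * s)))))) in *.
  set (c2 := exp (- (exp (2 * s) / ((1 - exp (2 * s)) * (1 - exp (2 * s)))))) in *.
  set (P2 := Pq (exp (2 * s)) (2 * N)) in *.
  assert (c1 * c2 <= A * P) by (apply Rmult_le_compat; lra).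
  assert (Hre : A * A / (P2 / (P * P)) = (A * P) * (A * P) / P2) by (field; split; lra).
  rewrite Hre.
  assert ((A * P) * (A * P) <= (A * P) * (A * P) / P2).
  { unfold Rdiv. rewrite <- (Rmult_1_r ((A * P) * (A * P))) at 1. apply Rmult_le_compat_l. nra.
    rewrite <- Rinv_1. apply Rinv_le_contravar; lra. }
  assert (0 <= c1 * c2) by nra.
  simpl. nra.
Qed.

Lemma Rabs_le_both x e : Rabs x <= e -> - e <= x <= e.
Proof. unfold Rabs. destruct (Rcase_abs x); lra. Qed.

Lemma tt_shift s N phi j : tt s (S N) phi (S j) = tt s N phi j.
Proof.
  unfold tt. rewrite !S_INR. replace (S j + S N)%nat with (2 + (j + N))%nat by lia.
  rewrite pow_add. replace (INR j + 1 - (INR N + 1)) with (INR j - INR N) by ring. simpl. ring.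
Qed.

Definition dd s phi N := tt s (S N) phi 0 + tt s N phi (S (2 * N)).

Lemma SS_step s N phi : SS s (S N) phi = SS s N phi + dd s phi N.
Proof.
  unfold SS, dd. replace (2 * S N)%nat with (S (S (2 * N))) by lia.
  rewrite rsum_shift. rewrite (rsum_ext (fun k => tt s (S N) phi (S k)) (tt s N phi)).
  2:{ intros. apply tt_shift. }
  change (rsum (tt s N phi) (S (S (2 * N)))) with (rsum (tt s N phi) (S (2 * N)) + tt s N phi (S (2 * N))). ring.
Qed.

Lemma SS_sum s N phi : SS s N phi = 1 + rsum (dd s phi) N.
Proof.
  induction N.
  - unfold SS. change (rsum (tt s 0 phi) (S (2 * 0))) with (0 + tt s 0 phi 0). unfold tt.
    replace (INR 0 - INR 0) with 0 by (simpl; ring). rewrite Rmult_0_l, cos_0.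
    replace (s * 0 ^ 2) with 0 by ring. rewrite exp_0. simpl. ring.
  - rewrite SS_step, IHN. simpl. ring.
Qed.

Lemma dd_bound s phi N : s < 0 -> Rabs (dd s phi N) <= 2 * exp s ^ N.
Proof.
  intros Hs.
  assert (Hp : 0 < exp s < 1). { split. apply exp_pos. rewrite <- exp_0. apply exp_increasing. lra. }
  unfold dd. eapply Rle_trans. apply Rabs_triang.
  pose proof (tt_abs1 s (S N) phi 0 Hs ltac:(lia)).
  pose proof (tt_abs2 s N phi (S (2 * N)) Hs ltac:(lia)).
  assert (exp s ^ (S N - 0) <= exp s ^ N) by (apply pow_le_dec; [lra | lia]).
  assert (exp s ^ (S (2 * N) - N) <= exp s ^ N) by (apply pow_le_dec; [lra | lia]).
  lra.
Qed.

Lemma sum_n_rsum (a : nat -> R) N : sum_n a N = rsum a (S N).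
Proof.
  induction N. rewrite sum_O. simpl. ring.
  rewrite sum_Sn, IHN. simpl. unfold plus. simpl. ring.
Qed.

Lemma SS_lim s phi : s < 0 -> exists l : R, is_lim_seq (fun N => SS s N phi) l.
Proof.
  intros Hs.
  assert (Hp : 0 < exp s < 1). { split. apply exp_pos. rewrite <- exp_0. apply exp_increasing. lra. }
  assert (Hex : ex_series (dd s phi)).
  { apply (@ex_series_le R_AbsRing R_CompleteNormedModule) with (b := fun n => 2 * exp s ^ n).
    intros n. change (norm (dd s phi n)) with (Rabs (dd s phi n)). apply dd_bound; auto.
    apply (ex_series_scal_l 2 (fun n => exp s ^ n)). apply ex_series_geom. rewrite Rabs_pos_eq; lra. }
  pose proof (Series_correct _ Hex) as HS.
  exists (1 + Series (dd s phi)).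
  assert (H1 : is_lim_seq (fun N => rsum (dd s phi) (S N)) (Series (dd s phi))).
  { eapply is_lim_seq_ext. intros n. apply sum_n_rsum. exact HS. }
  apply is_lim_seq_incr_1 in H1.
  eapply is_lim_seq_ext. intros n. symmetry. apply SS_sum.
  apply (is_lim_seq_plus' (fun _ => 1) _ 1). apply is_lim_seq_const.
  exact H1.
Qed.

Lemma theta_ineq s phi : s < 0 -> exists lp l0 : R,
  is_lim_seq (fun N => SS s N phi) lp /\ is_lim_seq (fun N => SS s N 0) l0 /\ l0 <= lp /\ 0 < l0.
Proof.
  intros Hs.
  assert (Hp : 0 < exp s < 1). { split. apply exp_pos. rewrite <- exp_0. apply exp_increasing. lra. }
  pose proof (exp2s_Q s Hs) as HQ.
  destruct (SS_lim s phi Hs) as [lp Hlp]. destruct (SS_lim s 0 Hs) as [l0 Hl0].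
  exists lp, l0. split; auto. split; auto.
  set (K := 2 / ((1 - exp (2 * s)) * (1 - exp s))).
  assert (HE : is_lim_seq (fun N => K * exp s ^ N) 0).
  { replace (Finite 0) with (Rbar_mult K 0) by (simpl; f_equal; ring).
    apply is_lim_seq_scal_l. apply is_lim_seq_geom. rewrite Rabs_pos_eq; lra. }
  assert (Herr : forall N ph, Rabs (UU s N ph - SS s N ph) <= K * exp s ^ N).
  { intros N ph. eapply Rle_trans. apply err_total; auto. right. unfold K. field. split; lra. }
  split.
  - assert (Hle : forall N, SS s N 0 - 2 * (K * exp s ^ N) <= SS s N phi).
    { intros N. pose proof (Rabs_le_both _ _ (Herr N phi)). pose proof (Rabs_le_both _ _ (Herr N 0)).
      pose proof (UU_mono s N phi Hs). lra. }
    assert (Hl : is_lim_seq (fun N => SS s N 0 - 2 * (K * exp s ^ N)) (l0 - 2 * 0)).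
    { apply is_lim_seq_minus'; auto. replace (Finite (2 * 0)) with (Rbar_mult 2 0) by (simpl; f_equal; ring).
      apply is_lim_seq_scal_l. auto. }
    pose proof (is_lim_seq_le _ _ _ _ Hle Hl Hlp). simpl in H. lra.
  - assert (Hle : forall N, delta s - K * exp s ^ N <= SS s N 0).
    { intros N. pose proof (Rabs_le_both _ _ (Herr N 0)). pose proof (UU_lb s N Hs). lra. }
    assert (Hl : is_lim_seq (fun N => delta s - K * exp s ^ N) (delta s - 0)).
    { apply is_lim_seq_minus'; auto. apply is_lim_seq_const. }
    pose proof (is_lim_seq_le _ _ _ _ Hle Hl Hl0). simpl in H. pose proof (delta_pos s). lra.
Qed.

Lemma sign_lem j N : powerRZ (-1) (Z.of_nat j - Z.of_nat N) = (-1) ^ (j + N).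
Proof.
  destruct (le_lt_dec N j) as [H | H].
  - rewrite <- Nat2Z.inj_sub by auto. rewrite <- pow_powerRZ.
    replace (j + N)%nat with ((j - N) + 2 * N)%nat by lia. rewrite pow_add, pow_1_even. ring.
  - replace (Z.of_nat j - Z.of_nat N)%Z with (- Z.of_nat (N - j))%Z by lia.
    rewrite powerRZ_neg', <- pow_powerRZ.
    replace (j + N)%nat with ((N - j) + 2 * j)%nat by lia. rewrite pow_add, pow_1_even.
    assert (((-1) ^ (N - j)) * ((-1) ^ (N - j)) = 1).
    { rewrite <- pow_add. replace (N - j + (N - j))%nat with (2 * (N - j))%nat by lia. apply pow_1_even. }
    assert ((-1) ^ (N - j) <> 0) by (intro Hc; rewrite Hc in H0; lra).
    field_simplify; auto. rewrite <- H0 at 1. field. auto.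
Qed.

Lemma cexp_RE w : cexp w = Cmult (RtoC (exp (fst w))) (E (snd w)).
Proof. unfold cexp, E, Cmult, RtoC, Re, Im. simpl. f_equal; ring. Qed.

Lemma term_lem u v j N :
  theta4_term (RtoC v) (0, u) (Z.of_nat j - Z.of_nat N) =
  Cmult (RtoC ((-1) ^ (j + N) * exp ((- PI * u) * (INR j - INR N) ^ 2)))
        (E ((INR j - INR N) * (2 * PI * v))).
Proof.
  unfold theta4_term. rewrite cexp_RE, sign_lem.
  set (n := (Z.of_nat j - Z.of_nat N)%Z).
  assert (Hn : IZR n = INR j - INR N) by (unfold n; rewrite minus_IZR, !INR_IZR_INZ; auto).
  assert (Hnn : IZR (n * n) = (INR j - INR N) ^ 2) by (rewrite mult_IZR, Hn; ring).
  set (w := Cplus _ _).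
  assert (H1 : fst w = - PI * u * (INR j - INR N) ^ 2).
  { unfold w. rewrite <- Hnn. unfold Cplus, Cmult, RtoC, Ci. simpl. ring. }
  assert (H2 : snd w = (INR j - INR N) * (2 * PI * v)).
  { unfold w. rewrite <- Hn. unfold Cplus, Cmult, RtoC, Ci. simpl. ring. }
  rewrite H1, H2. rewrite RRE. auto.
Qed.

Lemma aux_csum v tau N k :
  theta4_aux v tau N k = csum (fun j => theta4_term v tau (Z.of_nat j - Z.of_nat N)) k.
Proof. induction k; simpl; auto. rewrite IHk. auto. Qed.

Lemma part_fst u v N : fst (theta4_part (RtoC v) (0, u) N) = SS (- PI * u) N (2 * PI * v).
Proof.
  unfold theta4_part. rewrite aux_csum, fst_csum. unfold SS.
  replace (2 * N + 1)%nat with (S (2 * N)) by lia.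
  apply rsum_ext. intros k _. rewrite term_lem, fst_RE. unfold tt. ring.
Qed.

Lemma pow_m1_eq a b c : (a + b = 2 * c)%nat -> (-1) ^ a = (-1) ^ b.
Proof.
  intros H. assert ((-1) ^ a * (-1) ^ b = 1) by (rewrite <- pow_add, H; apply pow_1_even).
  assert ((-1) ^ b * (-1) ^ b = 1).
  { rewrite <- pow_add. replace (b + b)%nat with (2 * b)%nat by lia. apply pow_1_even. }
  nra.
Qed.

Lemma part_snd u v N : snd (theta4_part (RtoC v) (0, u) N) = 0.
Proof.
  unfold theta4_part. rewrite aux_csum, snd_csum.
  replace (2 * N + 1)%nat with (S (2 * N)) by lia.
  rewrite (rsum_ext _ (fun j => (-1) ^ (j + N) * exp (- PI * u * (INR j - INR N) ^ 2) * sin ((INR j - INR N) * (2 * PI * v)))).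
  2:{ intros k _. rewrite term_lem, snd_RE. auto. }
  set (f := fun j => (-1) ^ (j + N) * exp (- PI * u * (INR j - INR N) ^ 2) * sin ((INR j - INR N) * (2 * PI * v))).
  assert (rsum f (S (2 * N)) = - rsum f (S (2 * N))).
  { transitivity (rsum (fun k => -1 * f k) (S (2 * N))).
    2:{ rewrite rsum_scal. ring. }
    rewrite (rsum_rev f). apply rsum_ext. intros k Hk. unfold f.
    replace (S (2 * N) - 1 - k)%nat with (2 * N - k)%nat by lia.
    rewrite minus_INR by lia. rewrite mult_INR. simpl INR.
    rewrite (pow_m1_eq (2 * N - k + N) (k + N) (N + N)) by lia.
    replace (((1 + 1) * INR N - INR k - INR N)) with (- (INR k - INR N)) by ring.
    rewrite (Ropp_mult_distr_l_reverse (INR k - INR N) (2 * PI * v)), sin_neg. replace ((- (INR k - INR N)) ^ 2) with ((INR k - INR N) ^ 2) by ring.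
    ring. }
  lra.
Qed.

Lemma theta_main u v : 0 < u ->
  Im (Cdiv (theta4 (RtoC v) (0, u)) (theta4 (RtoC 0) (0, u))) = 0 /\
  Re (Cdiv (theta4 (RtoC v) (0, u)) (theta4 (RtoC 0) (0, u))) >= exp (- PI * v ^ 2 / u).
Proof.
  intros Hu. pose proof PI_RGT_0.
  assert (Hs : - PI * u < 0) by nra.
  destruct (theta_ineq (- PI * u) (2 * PI * v) Hs) as (lp & l0 & Hlp & Hl0 & Hle & Hpos).
  assert (Tv : theta4 (RtoC v) (0, u) = (lp, 0)).
  { unfold theta4, Clim. f_equal.
    - rewrite (Lim_seq_ext _ (fun N => SS (- PI * u) N (2 * PI * v))).
      rewrite (is_lim_seq_unique _ _ Hlp). auto. intros n. apply part_fst.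
    - rewrite (Lim_seq_ext _ (fun N => 0)). rewrite Lim_seq_const. auto. intros n. apply part_snd. }
  assert (T0 : theta4 (RtoC 0) (0, u) = (l0, 0)).
  { unfold theta4, Clim. f_equal.
    - rewrite (Lim_seq_ext _ (fun N => SS (- PI * u) N 0)).
      rewrite (is_lim_seq_unique _ _ Hl0). auto. intros n. rewrite part_fst. f_equal. ring.
    - rewrite (Lim_seq_ext _ (fun N => 0)). rewrite Lim_seq_const. auto. intros n. apply part_snd. }
  rewrite Tv, T0. unfold Cdiv, Cmult, Cinv, Re, Im. simpl.
  split. field. lra.
  assert (exp (- PI * v ^ 2 / u) <= 1).
  { rewrite <- exp_0. apply exp_le. unfold Rdiv.
    assert (0 <= PI * v ^ 2 * / u). { apply Rmult_le_pos. nra. left; apply Rinv_0_lt_compat; lra. }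
    nra. }
  assert (Hq : lp * (l0 / (l0 * (l0 * 1) + 0 * (0 * 1))) - 0 * (- 0 / (l0 * (l0 * 1) + 0 * (0 * 1))) = lp / l0)
    by (field; lra).
  rewrite Hq.
  assert (1 <= lp / l0). { apply Rmult_le_reg_r with l0; auto. unfold Rdiv. rewrite Rmult_assoc, Rinv_l; lra. }
  replace (v * (v * 1)) with (v ^ 2) by ring. lra.
Qed.

Lemma telescope (x : nat -> R) n : x n = x O + rsum (fun k => x (S k) - x k) n.
Proof. induction n; simpl. ring. lra. Qed.

Lemma conv_of_diff (x : nat -> R) c r : 0 <= r < 1 ->
  (forall k, Rabs (x (S k) - x k) <= c * r ^ k) -> exists l : R, is_lim_seq x l.
Proof.
  intros Hr H.
  set (d := fun k => x (S k) - x k).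
  assert (Hex : ex_series d).
  { apply (@ex_series_le R_AbsRing R_CompleteNormedModule) with (b := fun n => c * r ^ n).
    intros n. change (norm (d n)) with (Rabs (d n)). apply H.
    apply (ex_series_scal_l c (fun n => r ^ n)). apply ex_series_geom. rewrite Rabs_pos_eq; lra. }
  pose proof (Series_correct _ Hex) as HS.
  exists (x O + Series d).
  assert (H1 : is_lim_seq (fun N => rsum d (S N)) (Series d)).
  { eapply is_lim_seq_ext. intros n. apply sum_n_rsum. exact HS. }
  apply is_lim_seq_incr_1 in H1.
  eapply is_lim_seq_ext. intros n. symmetry. apply telescope.
  apply (is_lim_seq_plus' (fun _ => x O) _ (x O)). apply is_lim_seq_const. exact H1.
Qed.

Definition rp x q n := rprod (fun k => 1 - x * q ^ k) n.
Definition ell x q := real (Lim_seq (rp x q)).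

Lemma rp_bounds x q n : 0 <= x < 1 -> 0 < q < 1 -> 0 <= rp x q n <= 1.
Proof.
  intros Hx Hq. unfold rp.
  assert (forall k, 0 <= x * q ^ k <= x).
  { intros k. assert (0 <= q ^ k <= 1). split. apply pow_le; lra.
    pose proof (pow_le_dec q O k ltac:(lra) ltac:(lia)). simpl in H; lra. nra. }
  split. apply rprod_nonneg. intros k _. specialize (H k). lra.
  apply rprod_le1. intros k _. specialize (H k). lra.
Qed.

Lemma ell_spec x q : 0 <= x < 1 -> 0 < q < 1 ->
  is_lim_seq (rp x q) (ell x q) /\ exp (- (x / ((1 - x) * (1 - q)))) <= ell x q.
Proof.
  intros Hx Hq.
  destruct (conv_of_diff (rp x q) x q) as [l Hl].
  - lra.
  - intros k. unfold rp. simpl rprod. fold (rp x q k).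
    replace (rp x q k * (1 - x * q ^ k) - rp x q k) with (- (rp x q k * (x * q ^ k))) by ring.
    rewrite Rabs_Ropp. pose proof (rp_bounds x q k Hx Hq).
    assert (0 <= q ^ k) by (apply pow_le; lra).
    assert (0 <= x * q ^ k) by (apply Rmult_le_pos; lra).
    rewrite Rabs_pos_eq by (apply Rmult_le_pos; lra). nra.
  - unfold ell. rewrite (is_lim_seq_unique _ _ Hl). simpl. split; auto.
    assert (Hle : forall n, exp (- (x / ((1 - x) * (1 - q)))) <= rp x q n).
    { intros n. apply prod_lb; lra. }
    pose proof (is_lim_seq_le _ _ _ _ Hle (is_lim_seq_const _) Hl). simpl in H. auto.
Qed.

Lemma ell_pos x q : 0 <= x < 1 -> 0 < q < 1 -> 0 < ell x q.
Proof. intros. destruct (ell_spec x q H H0). pose proof (exp_pos (- (x / ((1 - x) * (1 - q))))). lra. Qed.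

Lemma qpoch_part_real x q n : qpoch_part (RtoC x) q n = RtoC (rp x q n).
Proof. induction n; simpl; auto. rewrite IHn. unfold rp. simpl. cring. Qed.

Lemma qpoch_real x q : 0 <= x < 1 -> 0 < q < 1 -> qpoch (RtoC x) q = RtoC (ell x q).
Proof.
  intros Hx Hq. unfold qpoch, Clim. change (RtoC (ell x q)) with (ell x q, 0). f_equal.
  - rewrite (Lim_seq_ext _ (rp x q)). auto. intros n. rewrite qpoch_part_real. auto.
  - rewrite (Lim_seq_ext _ (fun _ => 0)). rewrite Lim_seq_const. auto.
    intros n. rewrite qpoch_part_real. auto.
Qed.

Lemma Cmod_1_minus (w : C) : 1 - Cmod w <= Cmod (Cminus (RtoC 1) w) <= 1 + Cmod w.
Proof.
  split.
  - pose proof (Cmod_triangle (Cminus (RtoC 1) w) w).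
    replace (Cplus (Cminus (RtoC 1) w) w) with (RtoC 1) in H by cring. rewrite Cmod_1 in H. lra.
  - unfold Cminus. eapply Rle_trans. apply Cmod_triangle. rewrite Cmod_opp, Cmod_1. lra.
Qed.

Lemma Cmod_aq (a : C) q k : 0 < q -> Cmod (Cmult a (RtoC (q ^ k))) = Cmod a * q ^ k.
Proof. intros. rewrite Cmod_mult, Cmod_R, Rabs_pos_eq; auto. apply pow_le; lra. Qed.

Lemma qp_mod_ge (a : C) q n : Cmod a < 1 -> 0 < q < 1 ->
  rp (Cmod a) q n <= Cmod (qpoch_part a q n).
Proof.
  intros Ha Hq. pose proof (Cmod_ge_0 a). induction n.
  - simpl. rewrite Cmod_1. unfold rp. simpl. lra.
  - simpl qpoch_part. rewrite Cmod_mult. unfold rp. simpl rprod. fold (rp (Cmod a) q n).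
    pose proof (Cmod_1_minus (Cmult a (RtoC (q ^ n)))). rewrite Cmod_aq in H0 by lra.
    pose proof (rp_bounds (Cmod a) q n ltac:(lra) Hq).
    assert (0 <= q ^ n <= 1). { split. apply pow_le; lra. pose proof (pow_le_dec q O n ltac:(lra) ltac:(lia)). simpl in H2; lra. }
    assert (0 <= 1 - Cmod a * q ^ n) by nra.
    apply Rmult_le_compat; lra.
Qed.

Lemma qp_mod_le (a : C) q n : 0 < q < 1 ->
  Cmod (qpoch_part a q n) <= exp (Cmod a / (1 - q)).
Proof.
  intros Hq. pose proof (Cmod_ge_0 a).
  assert (H1 : forall n, Cmod (qpoch_part a q n) <= exp (Cmod a * rsum (fun k => q ^ k) n)).
  { induction n0.
    - simpl. rewrite Cmod_1, Rmult_0_r, exp_0. lra.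
    - simpl qpoch_part. rewrite Cmod_mult. simpl rsum. rewrite Rmult_plus_distr_l, exp_plus.
      pose proof (Cmod_1_minus (Cmult a (RtoC (q ^ n0)))). rewrite Cmod_aq in H0 by lra.
      pose proof (exp_ineq1_le (Cmod a * q ^ n0)).
      apply Rmult_le_compat; auto using Cmod_ge_0. lra. }
  eapply Rle_trans. apply H1. apply exp_le. pose proof (rsum_geom q n ltac:(lra)).
  unfold Rdiv. apply Rmult_le_compat_l; auto.
Qed.

Lemma qpoch_mod (a : C) q : Cmod a < 1 -> 0 < q < 1 -> ell (Cmod a) q <= Cmod (qpoch a q).
Proof.
  intros Ha Hq. pose proof (Cmod_ge_0 a).
  set (B := exp (Cmod a / (1 - q))).
  assert (Hd : forall k, Cmod (Cminus (qpoch_part a q (S k)) (qpoch_part a q k)) <= B * Cmod a * q ^ k).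
  { intros k. simpl qpoch_part.
    replace (Cminus (Cmult (qpoch_part a q k) (Cminus (RtoC 1) (Cmult a (RtoC (q ^ k))))) (qpoch_part a q k))
      with (Copp (Cmult (qpoch_part a q k) (Cmult a (RtoC (q ^ k))))) by ring.
    rewrite Cmod_opp, Cmod_mult, Cmod_aq by lra.
    pose proof (qp_mod_le a q k Hq). assert (0 <= q ^ k) by (apply pow_le; lra).
    rewrite <- Rmult_assoc. apply Rmult_le_compat_r. nra. fold B in H0. nra. }
  destruct (conv_of_diff (fun n => fst (qpoch_part a q n)) (B * Cmod a) q ltac:(lra)) as [lr Hlr].
  { intros k. eapply Rle_trans. 2: apply Hd. eapply Rle_trans. 2: apply Rmax_Cmod.
    eapply Rle_trans. 2: apply Rmax_l. right. f_equal. }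
  destruct (conv_of_diff (fun n => snd (qpoch_part a q n)) (B * Cmod a) q ltac:(lra)) as [li Hli].
  { intros k. eapply Rle_trans. 2: apply Hd. eapply Rle_trans. 2: apply Rmax_Cmod.
    eapply Rle_trans. 2: apply Rmax_r. right. f_equal. }
  assert (Hq2 : qpoch a q = (lr, li)).
  { unfold qpoch, Clim. f_equal.
    - unfold Re. rewrite (is_lim_seq_unique _ _ Hlr). auto.
    - unfold Im. rewrite (is_lim_seq_unique _ _ Hli). auto. }
  rewrite Hq2.
  destruct (ell_spec (Cmod a) q ltac:(lra) Hq) as [Hl _].
  pose proof (ell_pos (Cmod a) q ltac:(lra) Hq).
  assert (Hsq : ell (Cmod a) q * ell (Cmod a) q <= lr * lr + li * li).
  { assert (Hle : forall n, rp (Cmod a) q n * rp (Cmod a) q n <=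
        fst (qpoch_part a q n) * fst (qpoch_part a q n) + snd (qpoch_part a q n) * snd (qpoch_part a q n)).
    { intros n. pose proof (qp_mod_ge a q n Ha Hq). pose proof (rp_bounds (Cmod a) q n ltac:(lra) Hq).
      change (Cmod (qpoch_part a q n)) with (sqrt (fst (qpoch_part a q n) ^ 2 + snd (qpoch_part a q n) ^ 2)) in H1.
      set (w := fst (qpoch_part a q n) ^ 2 + snd (qpoch_part a q n) ^ 2) in *.
      assert (0 <= w) by (unfold w; nra).
      pose proof (sqrt_sqrt w H3). pose proof (sqrt_pos w).
      assert (rp (Cmod a) q n * rp (Cmod a) q n <= sqrt w * sqrt w) by (apply Rmult_le_compat; lra).
      rewrite H4 in H6. unfold w in H6. simpl in H6. lra. }
    pose proof (is_lim_seq_le _ _ _ _ Hle (is_lim_seq_mult' _ _ _ _ Hl Hl)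
       (is_lim_seq_plus' _ _ _ _ (is_lim_seq_mult' _ _ _ _ Hlr Hlr) (is_lim_seq_mult' _ _ _ _ Hli Hli))).
    simpl in H1. auto. }
  change (Cmod (lr, li)) with (sqrt (lr ^ 2 + li ^ 2)).
  rewrite <- (sqrt_Rsqr (ell (Cmod a) q)) by lra. apply sqrt_le_1_alt. unfold Rsqr. simpl. lra.
Qed.

Lemma Cmod_E t : Cmod (E t) = 1.
Proof.
  unfold Cmod, E. simpl. pose proof (sin2_cos2 t). unfold Rsqr in H.
  replace (cos t * (cos t * 1) + sin t * (sin t * 1)) with 1 by lra. apply sqrt_1.
Qed.

Lemma Cmod_cexp w : Cmod (cexp w) = exp (fst w).
Proof. rewrite cexp_RE, Cmod_mult, Cmod_E, Cmod_R, Rabs_pos_eq. ring. left; apply exp_pos. Qed.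

Lemma cexp_real r : cexp (RtoC r) = RtoC (exp r).
Proof. unfold cexp, RtoC, Re, Im. simpl. rewrite cos_0, sin_0. f_equal; ring. Qed.

Lemma Cdiv_real a b : b <> 0 -> Cdiv (RtoC a) (RtoC b) = RtoC (a / b).
Proof. intros. unfold Cdiv, Cmult, Cinv, RtoC. simpl. f_equal; field; auto. Qed.

Theorem corollary2p2 (q u v : R) (hq0 : 0 < q) (hq1 : q < 1) (hu : 0 < u) :
  Cmod (qpoch (qpow q (u, v)) q) >= Re (qpoch (qpow q (RtoC u)) q) * Rpower q (v ^ 2 / 4)
  /\ Re (Gamma_q q (RtoC u)) >= Cmod (Gamma_q q (u, v)) * Rpower q (v ^ 2 / 4)
  /\ Im (Cdiv (theta4 (RtoC v) (0, u)) (theta4 (RtoC 0) (0, u))) = 0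
  /\ Re (Cdiv (theta4 (RtoC v) (0, u)) (theta4 (RtoC 0) (0, u))) >= exp (- PI * v ^ 2 / u).
Proof.
  assert (Hlq : ln q < 0) by (rewrite <- ln_1; apply ln_increasing; lra).
  set (x := exp (u * ln q)).
  assert (Hx : 0 < x < 1). { split. apply exp_pos. rewrite <- exp_0. apply exp_increasing. nra. }
  assert (Hq1 : qpow q (RtoC u) = RtoC x).
  { unfold qpow. replace (Cmult (RtoC u) (RtoC (ln q))) with (RtoC (u * ln q)) by cring.
    apply cexp_real. }
  assert (Hmod : Cmod (qpow q (u, v)) = x).
  { unfold qpow. rewrite Cmod_cexp. unfold x. f_equal. simpl. ring. }
  assert (Hq' : 0 < q < 1) by lra.
  rewrite Hq1, (qpoch_real x q ltac:(lra) Hq').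
  pose proof (ell_pos x q ltac:(lra) Hq') as Hlx.
  assert (Hc : ell x q <= Cmod (qpoch (qpow q (u, v)) q)).
  { rewrite <- Hmod. apply qpoch_mod; auto. rewrite Hmod; lra. }
  assert (HR : 0 <= Rpower q (v ^ 2 / 4) <= 1).
  { unfold Rpower. split. left; apply exp_pos. rewrite <- exp_0. apply exp_le.
    assert (0 <= v ^ 2 / 4) by (unfold Rdiv; apply Rmult_le_pos; [apply pow2_ge_0 | lra]). nra. }
  destruct (theta_main u v hu) as [T1 T2].
  split; [| split; [| split]]; auto.
  - unfold Re, RtoC. cbn [fst].
    assert (ell x q * Rpower q (v ^ 2 / 4) <= ell x q * 1) by (apply Rmult_le_compat_l; lra). lra.
  - unfold Gamma_q. rewrite Hq1, (qpoch_real x q ltac:(lra) Hq'), (qpoch_real q q ltac:(lra) Hq').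
    pose proof (ell_pos q q ltac:(lra) Hq') as Hlq'.
    replace (Cmult (Cminus (RtoC 1) (RtoC u)) (RtoC (ln (1 - q)))) with (RtoC ((1 - u) * ln (1 - q))) by cring.
    rewrite cexp_real.
    replace (Cmult (RtoC (exp ((1 - u) * ln (1 - q)))) (RtoC (ell q q))) with
      (RtoC (exp ((1 - u) * ln (1 - q)) * ell q q)) by cring.
    rewrite Cdiv_real by lra.
    assert (Hnz : qpoch (qpow q (u, v)) q <> RtoC 0).
    { intros Hc0. rewrite Hc0, Cmod_0 in Hc. lra. }
    rewrite Cmod_div by auto. rewrite Cmod_mult, Cmod_cexp, Cmod_R, Rabs_pos_eq by lra.
    replace (fst (Cmult (Cminus (RtoC 1) (u, v)) (RtoC (ln (1 - q))))) with ((1 - u) * ln (1 - q))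
      by (unfold Cmult, Cminus, Cplus, Copp, RtoC; simpl; ring).
    unfold Re, RtoC. cbn [fst].
    set (K := exp ((1 - u) * ln (1 - q)) * ell q q).
    assert (HK : 0 < K) by (unfold K; apply Rmult_lt_0_compat; [apply exp_pos | lra]).
    set (Cm := Cmod (qpoch (qpow q (u, v)) q)) in *.
    assert (K / Cm <= K / ell x q).
    { unfold Rdiv. apply Rmult_le_compat_l. lra. apply Rinv_le_contravar; lra. }
    assert (0 <= K / Cm) by (unfold Rdiv; apply Rmult_le_pos; [lra | left; apply Rinv_0_lt_compat; lra]).
    replace (exp ((1 - u) * ln (1 - q)) * ell q q / Cm) with (K / Cm) by (unfold K; auto).
    fold K. assert (K / Cm * Rpower q (v ^ 2 / 4) <= K / Cm * 1) by (apply Rmult_le_compat_l; lra). lra.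
Qed.
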